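(* Consider the randomized mechanism which, given a profile $\mathbf x\in[0,1]^n$ with $n_1=|\{i:x_i\in[0,\tfrac12]\}|$ and $n_2=|\{i:x_i\in(\tfrac12,1]\}|$, outputs $y=0$ with probability $\frac{n_2^2}{n_1^2+n_2^2}$ and $y=1$ with probability $\frac{n_1^2}{n_1^2+n_2^2}$. This mechanism is a $2$-approximation for the $L_p$ social cost both for $p=1$ and for $p=+\infty$.
   Context: Agent $i$ at $x_i\in[0,1]$ incurs cost $c(x_i,y)=1-|x_i-y|$ from a facility at $y\in[0,1]$. $\mathrm{sc}_1(y,\mathbf x)=\sum_ic(x_i,y)$ and $\mathrm{sc}_\infty(y,\mathbf x)=\max_ic(x_i,y)$. A randomized mechanism $f$ is an $\alpha$-approximation if $\mathbb E_{y\sim f(\mathbf x)}[\mathrm{sc}_p(y,\mathbf x)]\le\alpha\min_{z\in[0,1]}\mathrm{sc}_p(z,\mathbf x)$ for every profile $\mathbf x$. *)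

(* Defs.v *)
From HB Require Import structures.
From mathcomp Require Import all_boot all_order all_algebra.
Set Implicit Arguments. Unset Strict Implicit. Unset Printing Implicit Defensive.
Import Order.TTheory GRing.Theory Num.Theory.
Local Open Scope ring_scope.

Section FL.
Variables (R : realFieldType) (n : nat).

Definition cost (xi y : R) : R := 1 - `|xi - y|.

Definition sc1 (x : 'I_n -> R) (y : R) : R := \sum_(i < n) cost (x i) y.

(* L_infinity social cost: max_i c(x_i,y).  The neutral element 0 is harmless:
   for x_i, y in [0,1] every cost is >= 0, and n >= 1 in the theorem. *)
Definition scinf (x : 'I_n -> R) (y : R) : R :=
  \big[Num.max/0]_(i < n) cost (x i) y.

Definition n1 (x : 'I_n -> R) : nat := #|[set i : 'I_n | x i <= 2^-1]|.
Definition n2 (x : 'I_n -> R) : nat := #|[set i : 'I_n | 2^-1 < x i]|.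

Definition prob0 (x : 'I_n -> R) : R :=
  ((n2 x)%:R ^+ 2) / ((n1 x)%:R ^+ 2 + (n2 x)%:R ^+ 2).
Definition prob1 (x : 'I_n -> R) : R :=
  ((n1 x)%:R ^+ 2) / ((n1 x)%:R ^+ 2 + (n2 x)%:R ^+ 2).

Definition mech_expected (sc : ('I_n -> R) -> R -> R) (x : 'I_n -> R) : R :=
  prob0 x * sc x 0 + prob1 x * sc x 1.

Definition in01 (t : R) : Prop := 0 <= t <= 1.

(* alpha-approximation: E[sc] <= alpha * min_{z in [0,1]} sc(z,x) for every
   profile; since the min is attained, equivalently <= alpha * sc(z,x) for all z. *)
Definition mech_approx (alpha : R) (sc : ('I_n -> R) -> R -> R) : Prop :=
  forall x : 'I_n -> R, (forall i, in01 (x i)) ->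
    forall z : R, in01 z -> mech_expected sc x <= alpha * sc x z.

End FL.

(* Main.v *)
Require Import Defs.
From HB Require Import structures.
From mathcomp Require Import all_boot all_order all_algebra.
From mathcomp Require Import ring lra.
Import Order.TTheory GRing.Theory Num.Theory.
Set Implicit Arguments. Unset Strict Implicit.
Local Open Scope ring_scope.

Section Aux.
Variable R : realFieldType.

Lemma cost_cases (a b : R) : (b <= a /\ cost a b = 1 - (a - b)) \/ (a < b /\ cost a b = 1 - (b - a)).
Proof.
rewrite /cost; case: (lerP b a) => h.
  by left; split => //; rewrite ger0_norm // subr_ge0.
by right; split => //; rewrite ltr0_norm ?subr_lt0 // opprB.
Qed.

Lemma pw1 (a z : R) : in01 a -> in01 z ->
  (1 - z) * cost a 0 + z * cost a 1 <= cost a z.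
Proof.
move=> /andP[a0 a1] /andP[z0 z1].
case: (cost_cases a 0) => [[h ->]|[h ->]]; last by lra.
case: (cost_cases a 1) => [[h' ->]|[h' ->]];
case: (cost_cases a z) => [[h'' ->]|[h'' ->]]; nra.
Qed.

Lemma pw_lo (a z : R) : in01 a -> in01 z -> a <= 2^-1 -> cost a 1 <= 2 * cost a z.
Proof.
move=> /andP[a0 a1] /andP[z0 z1] ha.
case: (cost_cases a 1) => [[h' ->]|[h' ->]];
case: (cost_cases a z) => [[h'' ->]|[h'' ->]]; lra.
Qed.

Lemma pw_hi (a z : R) : in01 a -> in01 z -> 2^-1 < a -> cost a 0 <= 2 * cost a z.
Proof.
move=> /andP[a0 a1] /andP[z0 z1] ha.
case: (cost_cases a 0) => [[h' ->]|[h' ->]];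
case: (cost_cases a z) => [[h'' ->]|[h'' ->]]; lra.
Qed.

Lemma pw_half (a z : R) : in01 a -> in01 z ->
  (a <= 2^-1 /\ z <= 2^-1) \/ (2^-1 < a /\ 2^-1 <= z) -> 2^-1 <= cost a z.
Proof.
move=> /andP[a0 a1] /andP[z0 z1] H.
case: (cost_cases a z) => [[h'' ->]|[h'' ->]]; case: H => -[]; lra.
Qed.

Lemma cost_le1 (a z : R) : cost a z <= 1.
Proof. by rewrite /cost lerBlDr lerDl. Qed.

End Aux.

Section Main.
Variables (R : realFieldType) (n : nat) (x : 'I_n -> R).
Hypothesis hx : forall i, in01 (x i).

Lemma n12 : (n1 x + n2 x = n)%N.
Proof.
rewrite /n1 /n2.
have -> : [set i | 2^-1 < x i] = ~: [set i | x i <= 2^-1].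
  by apply/setP => i; rewrite !inE ltNge.
by rewrite cardsC card_ord.
Qed.

Lemma sum_ge (F : 'I_n -> R) (P : pred 'I_n) c :
  (forall i, P i -> c <= F i) -> (forall i, ~~ P i -> 0 <= F i) ->
  c *+ #|[set i | P i]| <= \sum_i F i.
Proof.
move=> H1 H2; rewrite -sumr_const big_mkcond /=.
apply: ler_sum => i _; rewrite inE; case: ifP => h; first exact: H1.
by apply: H2; rewrite h.
Qed.

Lemma S0_ge : (n1 x)%:R / 2 <= sc1 x 0.
Proof.
rewrite /sc1 mulr_natl.
apply: sum_ge => i h; have /andP[a0 a1] := hx i;
case: (cost_cases (x i) 0) => [[h' ->]|[h' ->]]; try lra.

Qed.

Lemma S1_ge : (n2 x)%:R / 2 <= sc1 x 1.
Proof.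
rewrite /sc1 mulr_natl.
apply: sum_ge => i h; have /andP[a0 a1] := hx i;
case: (cost_cases (x i) 1) => [[h' ->]|[h' ->]]; try lra.

Qed.

Lemma S01 : sc1 x 0 + sc1 x 1 = n%:R.
Proof.
rewrite /sc1 -big_split /=.
rewrite (eq_bigr (fun _ => 1)) ?sumr_const ?card_ord // => i _.
have /andP[a0 a1] := hx i.
case: (cost_cases (x i) 0) => [[h' ->]|[h' ->]];
case: (cost_cases (x i) 1) => [[h'' ->]|[h'' ->]]; lra.
Qed.

Lemma sc1_lin z : in01 z -> (1 - z) * sc1 x 0 + z * sc1 x 1 <= sc1 x z.
Proof.
move=> hz; rewrite /sc1 !mulr_sumr -big_split /=.
by apply: ler_sum => i _; apply: pw1.
Qed.

Lemma mechE sc : mech_expected sc x =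
  ((n2 x)%:R ^+ 2 * sc x 0 + (n1 x)%:R ^+ 2 * sc x 1) /
  ((n1 x)%:R ^+ 2 + (n2 x)%:R ^+ 2).
Proof. by rewrite /mech_expected /prob0 /prob1 mulrDl; congr (_ + _); rewrite mulrAC. Qed.

End Main.

Lemma bigmax_le (R : realFieldType) n (F : 'I_n -> R) c :
  0 <= c -> (forall i, F i <= c) -> \big[Num.max/0]_(i < n) F i <= c.
Proof.
move=> c0 H; elim/big_ind: _ => // u v hu hv.
by rewrite ge_max hu hv.
Qed.

Lemma le_bigmax (R : realFieldType) n (F : 'I_n -> R) j :
  F j <= \big[Num.max/0]_(i < n) F i.
Proof. by rewrite (bigD1 j) //= le_max lexx. Qed.

Lemma bigmax_ge0 (R : realFieldType) n (F : 'I_n -> R) :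
  0 <= \big[Num.max/0]_(i < n) F i.
Proof. by elim/big_rec: _ => // i y _ hy; rewrite le_max hy orbT. Qed.

Theorem theorem12 (R : realFieldType) (n : nat) (hn : (0 < n)%N) :
  mech_approx 2 (@sc1 R n) /\ mech_approx 2 (@scinf R n).
Proof.
have common : forall x : 'I_n -> R, (forall i, in01 (x i)) ->
  let a := (n1 x)%:R : R in let b := (n2 x)%:R : R in
  [/\ 0 <= a, 0 <= b, a + b = n%:R & 0 < a ^+ 2 + b ^+ 2].
  move=> x hx a b.
  have hab : a + b = n%:R by rewrite -natrD n12.
  have hn' : 0 < n%:R :> R by rewrite ltr0n.
  have ha : 0 <= a by rewrite ler0n.
  have hb : 0 <= b by rewrite ler0n.
  have hs : 0 < (a + b) ^+ 2 by rewrite hab exprn_gt0.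
  have hs2 : 0 <= (a - b) ^+ 2 by rewrite sqr_ge0.
  split => //; nra.
split.
  move=> x hx z hz.
  have [ha hb hab hD] := common x hx.
  move: ha hb hab hD.
  set a := (n1 x)%:R; set b := (n2 x)%:R => ha hb hab hD.
  rewrite mechE ler_pdivrMr // -/a -/b.
  have s0 := S0_ge hx; have s1 := S1_ge hx; have s01 := S01 hx.
  have sz := sc1_lin hx hz. rewrite -/a -/b in s0 s1.
  move: s0 s1 s01 sz.
  set s0 := sc1 x 0; set s1 := sc1 x 1; set sz := sc1 x z => h0 h1 h01 hz'.
  have /andP[z0 z1] := hz.
  have hs1 : s1 = a + b - s0 by lra.
  have K0 : b ^+ 2 * s0 + a ^+ 2 * s1 <= 2 * (a ^+ 2 + b ^+ 2) * s0.
    have e1 : 0 <= (3 * a ^+ 2 + b ^+ 2) * (s0 - a / 2) by apply: mulr_ge0; nra.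
    have e2 : 0 <= a * (a - b) ^+ 2 by apply: mulr_ge0; rewrite ?sqr_ge0.
    rewrite hs1; nra.
  have K1 : b ^+ 2 * s0 + a ^+ 2 * s1 <= 2 * (a ^+ 2 + b ^+ 2) * s1.
    have e1 : 0 <= (3 * b ^+ 2 + a ^+ 2) * (s1 - b / 2) by apply: mulr_ge0; nra.
    have e2 : 0 <= b * (a - b) ^+ 2 by apply: mulr_ge0; rewrite ?sqr_ge0.
    have hs0 : s0 = a + b - s1 by lra.
    rewrite hs0; nra.
  have e3 : 0 <= 2 * (a ^+ 2 + b ^+ 2) * (sz - ((1 - z) * s0 + z * s1)).
    by apply: mulr_ge0; nra.
  nra.
move=> x hx z hz.
have [ha hb hab hD] := common x hx.
have c1 : forall y, scinf x y <= 1.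
  by move=> y; apply: bigmax_le => // i; apply: cost_le1.
have g0 := bigmax_ge0 (fun i => cost (x i) z).
rewrite -/(scinf x z) in g0.
case: (posnP (n2 x)) => H2.
  have Hlo : forall i, x i <= 2^-1.
    move=> i; rewrite leNgt; apply/negP => hi.
    by move/eqP: H2; rewrite cards_eq0 => /eqP/setP/(_ i); rewrite !inE hi.
  rewrite /mech_expected /prob0 /prob1 H2 expr0n /= addr0 mul0r mul0r add0r.
  rewrite divff; last by move: hD; rewrite H2 expr0n /= addr0 => /lt0r_neq0.
  rewrite mul1r; apply: bigmax_le; first by rewrite mulr_ge0.
  move=> i; apply: le_trans (pw_lo (hx i) hz (Hlo i)) _.
  by rewrite ler_pM2l // le_bigmax.
case: (posnP (n1 x)) => H1.
  have Hhi : forall i, 2^-1 < x i.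
    move=> i; rewrite ltNge; apply/negP => hi.
    by move/eqP: H1; rewrite cards_eq0 => /eqP/setP/(_ i); rewrite !inE hi.
  rewrite /mech_expected /prob0 /prob1 H1 expr0n /= add0r mul0r mul0r addr0.
  rewrite divff; last by move: hD; rewrite H1 expr0n /= add0r => /lt0r_neq0.
  rewrite mul1r; apply: bigmax_le; first by rewrite mulr_ge0.
  move=> i; apply: le_trans (pw_hi (hx i) hz (Hhi i)) _.
  by rewrite ler_pM2l // le_bigmax.
have [ia Ha] : exists i, x i <= 2^-1.
  by move/card_gt0P: H1 => [i]; rewrite inE => ?; exists i.
have [ib Hb] : exists i, 2^-1 < x i.
  by move/card_gt0P: H2 => [i]; rewrite inE => ?; exists i.
have half : 2^-1 <= scinf x z.
  have /andP[z0 z1] := hz.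
  case: (lerP z 2^-1) => hz2.
    apply: le_trans (le_bigmax _ ia); apply: pw_half => //; by left.
  apply: le_trans (le_bigmax _ ib); apply: pw_half => //; right; split => //; exact: ltW.
rewrite mechE ler_pdivrMr //.
move: (c1 0) (c1 1) (bigmax_ge0 (fun i => cost (x i) 0)) (bigmax_ge0 (fun i => cost (x i) 1)).
rewrite -/(scinf x 0) -/(scinf x 1).
move: ha hb hD half.
set a := (n1 x)%:R; set b := (n2 x)%:R.
set s0 := scinf x 0; set s1 := scinf x 1; set sz := scinf x z => ha hb hD half k0 k1 p0 p1.
have e1 : 0 <= b ^+ 2 * (1 - s0) by apply: mulr_ge0; nra.
have e2 : 0 <= a ^+ 2 * (1 - s1) by apply: mulr_ge0; nra.
have e3 : 0 <= (a ^+ 2 + b ^+ 2) * (2 * sz - 1) by apply: mulr_ge0; nra.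
nra.
Qed.
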